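(* For every graph $G$ on $m\ge 6$ vertices, $\lambda_3\ge d_6$, where $\lambda_3$ is the third largest eigenvalue of the Laplacian matrix $L(G)$ and $d_6$ is the sixth largest vertex degree of $G$.
   Context: All graphs are finite, simple, unweighted and undirected. $L(G)=D(G)-A(G)$ with $A(G)$ the adjacency matrix and $D(G)$ the diagonal matrix of degrees. Laplacian eigenvalues $\lambda_1\ge\lambda_2\ge\cdots$ and degrees $d_1\ge d_2\ge\cdots$ are listed in nonincreasing order with multiplicity. *)

(* Defs.v *)
From HB Require Import structures.
From mathcomp Require Import all_boot all_order all_algebra.
Set Implicit Arguments. Unset Strict Implicit. Unset Printing Implicit Defensive.
Import Order.TTheory GRing.Theory Num.Theory.

Definition simple_graph (m : nat) (e : rel 'I_m) : Prop :=
  (forall i j, e i j = e j i) /\ (forall i, e i i = false).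

Definition deg (m : nat) (e : rel 'I_m) (i : 'I_m) : nat := #|[set j | e i j]|.

Definition degree_seq (m : nat) (e : rel 'I_m) : seq nat :=
  sort geq [seq deg e i | i <- enum 'I_m].

Local Open Scope ring_scope.

Definition laplacian (R : pzRingType) (m : nat) (e : rel 'I_m) : 'M[R]_m :=
  \matrix_(i, j) ((if i == j then (deg e i)%:R else 0) - (e i j)%:R).

Definition laplacian_spectrum (R : rcfType) (m : nat) (e : rel 'I_m)
  (lam : seq R) : Prop :=
  [/\ size lam = m,
      sorted (fun x y => y <= x) lam &
      char_poly (laplacian R e) = \prod_(x <- lam) ('X - x%:P)].

(* Main.v *)
Require Import Defs.
From HB Require Import structures.
From mathcomp Require Import all_boot all_order all_algebra.
From mathcomp Require Import zify ring.
From mathcomp.real_closed Require Import complex.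
Import Order.TTheory GRing.Theory Num.Theory.
Set Implicit Arguments. Unset Strict Implicit. Unset Printing Implicit Defensive.

Definition pairs15 : seq (nat * nat) :=
  [:: (0,1); (0,2); (0,3); (0,4); (0,5); (1,2); (1,3); (1,4); (1,5);
      (2,3); (2,4); (2,5); (3,4); (3,5); (4,5)].

Fixpoint pidx (i j : nat) (l : seq (nat*nat)) : nat :=
  if l is (a,b) :: l' then (if eqn a i && eqn b j then 0 else (pidx i j l').+1) else 0.

Definition adjB (bs : seq bool) (i j : nat) : bool :=
  if i < j then nth false bs (pidx i j pairs15)
  else if j < i then nth false bs (pidx j i pairs15) else false.

Definition table (bs : seq bool) : seq (seq bool) :=
  [seq [seq adjB bs i j | j <- iota 0 6] | i <- iota 0 6].

Definition tadj (t : seq (seq bool)) (i j : nat) : bool := nth false (nth [::] t i) j.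

Definition posF (adj : nat -> nat -> bool) (a b c d : nat) : nat :=
  adj a c + [&& ~~ eqn a b, ~~ eqn c d & adj b d].
Definition negF (adj : nat -> nat -> bool) (a b c d : nat) : nat :=
  (~~ eqn c d && adj a d) + (~~ eqn a b && adj b c).
Definition orth adj a b c d := eqn (posF adj a b c d) (negF adj a b c d).
Definition dneg adj a b := posF adj a b a b <= negF adj a b a b.

Definition good (adj : nat -> nat -> bool) (c : seq nat) : bool :=
  if c is [:: a1; b1; a2; b2; a3; b3; _; _; _] then
    [&& orth adj a1 b1 a2 b2, orth adj a1 b1 a3 b3, orth adj a2 b2 a3 b3,
        orth adj a2 b2 a1 b1, orth adj a3 b3 a1 b1, orth adj a3 b3 a2 b2,
        dneg adj a1 b1, dneg adj a2 b2 & dneg adj a3 b3]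
  else false.
Definition trips : seq (seq nat) := [::
  [:: 0; 1; 0; 2; 0; 0; 1; 2; 0];
  [:: 0; 2; 0; 3; 0; 0; 2; 3; 0];
  [:: 0; 1; 0; 3; 0; 0; 1; 3; 0];
  [:: 0; 3; 0; 4; 0; 0; 3; 4; 0];
  [:: 0; 2; 0; 4; 0; 0; 2; 4; 0];
  [:: 0; 1; 0; 4; 0; 0; 1; 4; 0];
  [:: 0; 4; 0; 5; 0; 0; 4; 5; 0];
  [:: 0; 3; 0; 5; 0; 0; 3; 5; 0];
  [:: 0; 5; 0; 0; 1; 2; 5; 0; 1];
  [:: 0; 2; 0; 5; 0; 0; 2; 5; 0];
  [:: 0; 2; 0; 0; 1; 3; 2; 0; 1];
  [:: 0; 1; 0; 0; 2; 3; 1; 0; 2];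
  [:: 0; 4; 0; 0; 1; 2; 4; 0; 1];
  [:: 0; 1; 0; 5; 0; 0; 1; 5; 0];
  [:: 0; 3; 0; 0; 1; 2; 3; 0; 1];
  [:: 0; 0; 1; 2; 1; 3; 0; 2; 1];
  [:: 0; 1; 0; 0; 3; 4; 1; 0; 3];
  [:: 0; 1; 0; 0; 2; 4; 1; 0; 2];
  [:: 0; 2; 0; 0; 1; 4; 2; 0; 1];
  [:: 0; 2; 0; 0; 3; 4; 2; 0; 3];
  [:: 0; 3; 0; 0; 2; 4; 3; 0; 2];
  [:: 0; 0; 1; 2; 3; 4; 0; 1; 3];
  [:: 0; 0; 1; 2; 1; 4; 0; 2; 1];
  [:: 0; 4; 0; 0; 2; 3; 4; 0; 2];
  [:: 0; 3; 0; 0; 1; 4; 3; 0; 1];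
  [:: 0; 2; 0; 0; 4; 5; 2; 0; 4];
  [:: 0; 1; 0; 0; 3; 5; 1; 0; 3];
  [:: 0; 0; 1; 2; 2; 3; 0; 1; 2];
  [:: 0; 4; 0; 0; 1; 3; 4; 0; 1];
  [:: 0; 0; 1; 2; 2; 4; 0; 1; 2];
  [:: 0; 1; 0; 0; 2; 5; 1; 0; 2];
  [:: 0; 2; 0; 0; 3; 5; 2; 0; 3];
  [:: 0; 2; 0; 0; 1; 5; 2; 0; 1];
  [:: 0; 1; 0; 0; 4; 5; 1; 0; 4];
  [:: 0; 0; 1; 2; 1; 5; 0; 2; 1];
  [:: 0; 5; 0; 0; 2; 3; 5; 0; 2];
  [:: 0; 0; 1; 2; 4; 5; 0; 1; 4];
  [:: 0; 0; 1; 2; 3; 5; 0; 1; 3];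
  [:: 0; 3; 0; 0; 1; 5; 3; 0; 1];
  [:: 0; 3; 0; 0; 2; 5; 3; 0; 2];
  [:: 0; 5; 0; 0; 1; 3; 5; 0; 1]].

Definition chk (bs : seq bool) : bool := let t := table bs in has (good (tadj t)) trips.
Fixpoint allbits (n : nat) : seq (seq bool) :=
  if n is n'.+1 then [seq b :: s | b <- [:: true; false], s <- allbits n']
  else [:: [::]].

Lemma chk_all : all chk (allbits 15).
Proof. vm_compute. reflexivity. Qed.

Definition nzN (a b u : nat) := eqn u a || (~~ eqn a b && eqn u b).
Definition tri (c : seq nat) : bool :=
  if c is [:: a1; b1; a2; b2; a3; b3; u1; u2; u3] then
    [&& all (fun x => x < 6) c, nzN a1 b1 u1, nzN a2 b2 u2, nzN a3 b3 u3,
        ~~ nzN a2 b2 u1, ~~ nzN a3 b3 u1 & ~~ nzN a3 b3 u2]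
  else false.

Lemma tri_all : all tri trips.
Proof. vm_compute. reflexivity. Qed.

Lemma allbits_mem s : s \in allbits (size s).
Proof.
elim: s => [|b s IH] //=.
by case: b; rewrite !mem_cat ?(mem_map (fun x y => (@congr1 _ _ (behead) _ _ ) ))/=; rewrite ?mem_cat ?(map_f (cons _)) ?orbT.
Qed.

Definition bits_of (g : rel 'I_6) : seq bool :=
  [seq g (inord pr.1) (inord pr.2) | pr <- pairs15].

Lemma tadj_ok (g : rel 'I_6) : (forall i j, g i j = g j i) -> (forall i, g i i = false) ->
  forall i j, i < 6 -> j < 6 -> tadj (table (bits_of g)) i j = g (inord i) (inord j).
Proof.
move=> gs gi i j hi hj.
rewrite /tadj /table (nth_map 0) ?size_iota // nth_iota // (nth_map 0) ?size_iota //.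
rewrite nth_iota // !add0n.
case: i hi => [|[|[|[|[|[|i]]]]]] hi //; case: j hj => [|[|[|[|[|[|j]]]]]] hj //.
all: rewrite /adjB /bits_of /=.
all: first [done | by rewrite gs | by rewrite gi].
Qed.

Lemma card_count (T : finType) (P : pred T) : #|[set u | P u]| = count P (enum T).
Proof. rewrite cardsE cardE /enum_mem size_filter count_filter. by apply: eq_count => x; rewrite /= !inE andbT. Qed.

Lemma sel m (e : rel 'I_m) : 6 <= m ->
  exists f : 'I_6 -> 'I_m, injective f /\ forall i, nth 0 (degree_seq e) 5 <= deg e (f i).
Proof.
move=> m6; set d := nth 0 (degree_seq e) 5.
set T := [set u | d <= deg e u].
have hT : 6 <= #|T|.
  rewrite /T card_count.
  have -> : count (fun u => d <= deg e u) (enum 'I_m) = count (leq d) (degree_seq e).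
    by rewrite /degree_seq [RHS](permP (permEl (perm_sort _ _))) [RHS]count_map.
  rewrite /d; set ds := degree_seq e.
  have sz : size ds = m by rewrite size_sort size_map size_enum_ord.
  have srt : sorted geq ds by apply: sort_sorted => x y; exact: leq_total.
  have := count_cat (leq (nth 0 ds 5)) (take 6 ds) (drop 6 ds); rewrite cat_take_drop => ->.
  suff : count (leq (nth 0 ds 5)) (take 6 ds) = 6 by lia.
  have st : size (take 6 ds) = 6 by rewrite size_takel // sz.
  apply/eqP; rewrite -{2}st -all_count; apply/(all_nthP 0) => i hi.
  rewrite st in hi; rewrite nth_take //.
  have gtr : transitive geq by move=> x y z h1 h2; apply: leq_trans h2 h1.
  have := sorted_leq_nth gtr (fun x => leqnn x) 0 srt.
  move=> /(_ i 5); rewrite !inE sz; apply; lia.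
pose f (i : 'I_6) := enum_val (widen_ord hT i).
exists f; split.
  by move=> i j /enum_val_inj /(congr1 val) /= /val_inj.
by move=> i; have := enum_valP (widen_ord hT i); rewrite inE.
Qed.

Local Open Scope ring_scope.
Local Open Scope sesquilinear_scope.

Definition qf (C : numClosedFieldType) m (M : 'M[C]_m) (v : 'rV[C]_m) : C := (v *m M *m v^t*) 0 0.

Definition nzO (p : 'I_6 * 'I_6) (u : 'I_6) : bool := (u == p.1) || ((p.1 != p.2) && (u == p.2)).

Section Graph.
Variable C : numClosedFieldType.
Variables (m : nat) (e : rel 'I_m) (f : 'I_6 -> 'I_m).
Hypothesis esym : forall i j, e i j = e j i.
Hypothesis finj : injective f.

Definition g (i j : 'I_6) := e (f i) (f j).
Definition posO (p q : 'I_6 * 'I_6) : nat :=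
  g p.1 q.1 + [&& p.1 != p.2, q.1 != q.2 & g p.2 q.2].
Definition negO (p q : 'I_6 * 'I_6) : nat :=
  ((q.1 != q.2) && g p.1 q.2) + ((p.1 != p.2) && g p.2 q.1).

Definition wv (p : 'I_6 * 'I_6) (u : 'I_m) : C :=
  (u == f p.1)%:R - ((p.1 != p.2) && (u == f p.2))%:R.

Lemma sum_delta (h : 'I_m -> C) z : \sum_u (u == z)%:R * h u = h z.
Proof.
rewrite (bigD1 z) //= eqxx mul1r big1 ?addr0 // => u /negbTE ->.
by rewrite mul0r.
Qed.

Lemma sum_wv (h : 'I_m -> C) p :
  \sum_u wv p u * h u = h (f p.1) - (p.1 != p.2)%:R * h (f p.2).
Proof.
rewrite /wv; under eq_bigr do rewrite mulrBl.
rewrite sumrB sum_delta; congr (_ - _).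
case: (p.1 != p.2) => /=; last by rewrite mul0r big1 // => u _; rewrite mul0r.
by rewrite mul1r sum_delta.
Qed.

Lemma conj_wv p u : (wv p u)^* = wv p u.
Proof. by rewrite /wv rmorphB /= !conjC_nat. Qed.

Variable p : 'I_3 -> 'I_6 * 'I_6.
Definition W : 'M[C]_(3, m) := \matrix_(k, u) wv (p k) u.
Definition Ac : 'M[C]_m := \matrix_(u, v) (e u v)%:R.

Lemma sum_W k (h : 'I_m -> C) :
  \sum_u W k u * h u = h (f (p k).1) - ((p k).1 != (p k).2)%:R * h (f (p k).2).
Proof. by under eq_bigr do rewrite mxE; rewrite sum_wv. Qed.

Lemma G_entry k l : (W *m Ac *m W^t*) k l = (posO (p k) (p l))%:R - (negO (p k) (p l))%:R.
Proof.
rewrite !mxE.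
under eq_bigr do rewrite !mxE conj_wv mulrC.
rewrite sum_wv !sum_W !mxE /posO /negO /g.
case: (p k) => a b; case: (p l) => c d /=.
case: (a != b); case: (c != d) => /=; rewrite ?mul1r ?mul0r ?subr0 ?natrD ?add0n ?addn0.
all: ring.
Qed.


Lemma lap_split d : laplacian C e - (d%:R)%:M =
  diag_mx (\row_u ((deg e u)%:R - d%:R)) - Ac.
Proof.
apply/matrixP => i j; rewrite !mxE.
case: (eqVneq i j) => [->|ne]; rewrite ?eqxx ?(negbTE ne) /= ?mulr1n ?mulr0n; ring.
Qed.

Lemma qfB M N (x : 'rV[C]_m) : qf (M - N) x = qf M x - qf N x.
Proof. by rewrite /qf mulmxBr mulmxBl !mxE. Qed.

Lemma qf_diag (dd : 'rV[C]_m) (z : 'rV[C]_m) :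
  qf (diag_mx dd) z = \sum_u (z 0 u * dd 0 u * (z 0 u)^*).
Proof.
rewrite /qf mul_mx_diag !mxE; apply: eq_bigr => u _; rewrite !mxE.
done.
Qed.

Variable d : nat.
Hypothesis Hdeg : forall i, (d <= deg e (f i))%N.
Hypothesis Horth : forall k l, k != l -> posO (p k) (p l) = negO (p k) (p l).
Hypothesis Hdiag : forall k, (posO (p k) (p k) <= negO (p k) (p k))%N.

Lemma graph_qf (c : 'rV_3) : 0 <= qf (laplacian C e - (d%:R)%:M) (c *m W).
Proof.
rewrite lap_split qfB qf_diag subr_ge0.
apply: (@le_trans _ _ 0).
  have -> : qf Ac (c *m W) = (c *m (W *m Ac *m W^t*) *m c^t*) 0 0.
    by rewrite /qf trmx_mul map_mxM !mulmxA.
  rewrite !mxE; apply: sumr_le0 => l _; rewrite !mxE.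
  rewrite (bigD1 l) //= big1 ?addr0; last first.
    by move=> k kl; rewrite G_entry Horth ?subrr ?mulr0 // eq_sym.
  rewrite G_entry mulrAC; apply: mulr_ge0_le0; first exact: mul_conjC_ge0.
  by rewrite subr_le0 ler_nat.
apply: sumr_ge0 => u _.
case: (pickP (fun i => f i == u)) => [i /eqP <-|none].
  rewrite !mxE mulrAC; apply: mulr_ge0; first exact: mul_conjC_ge0.
  by rewrite subr_ge0 ler_nat.
have nu : forall i, (u == f i) = false by move=> i; rewrite eq_sym; exact: none.
have -> : (c *m W) 0 u = 0.
  rewrite !mxE big1 // => k _; rewrite !mxE /wv.
  by rewrite !nu andbF subrr mulr0.
by rewrite !mul0r.
Qed.


Variable q : 'I_3 -> 'I_6.
Hypothesis Hpiv : forall k, nzO (p k) (q k).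
Hypothesis Htri : forall k l : 'I_3, (k < l)%N -> ~~ nzO (p l) (q k).

Lemma W_f k u : W k (f u) =
  (u == (p k).1)%:R - (((p k).1 != (p k).2) && (u == (p k).2))%:R.
Proof. by rewrite mxE /wv !(inj_eq finj). Qed.

Lemma W_z k u : ~~ nzO (p k) u -> W k (f u) = 0.
Proof.
rewrite W_f /nzO negb_or => /andP [/negbTE -> /negbTE ->].
by rewrite subrr.
Qed.

Lemma W_nz k u : nzO (p k) u -> W k (f u) != 0.
Proof.
rewrite W_f /nzO; case: (p k) => a b /=.
case: (eqVneq u a) => [->|ua] /=.
  by case: (eqVneq a b) => /= _; rewrite ?mulr0n ?mulr1n ?subr0 ?oner_eq0.
case: (eqVneq a b) => //= _ ->; by rewrite ?mulr0n ?mulr1n sub0r oppr_eq0 oner_eq0.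
Qed.

Lemma W_rank : \rank W = 3%N.
Proof.
apply/eqP; rewrite eqn_leq rank_leq_row /= leqNgt; apply/negP => hlt.
have : kermx W != 0 by rewrite -mxrank_eq0 mxrank_ker; lia.
case/rowV0Pn => v /sub_kermxP vW vnz.
suff v0 : v = 0 by rewrite v0 eqxx in vnz.
have H : forall n (k : 'I_3), (k = n :> nat) -> v 0 k = 0.
  elim/ltn_ind => n IH k kn.
  have := congr1 (fun M : 'M[C]_(1,m) => M 0 (f (q k))) vW; rewrite !mxE.
  rewrite (bigD1 k) //= big1 ?addr0.
    by move/eqP; rewrite mulf_eq0 (negbTE (W_nz (Hpiv k))) orbF => /eqP.
  move=> l lk; case: (ltngtP l k) => [lltk|kltl|leq].
  - by rewrite (IH l) ?mul0r // -kn.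
  - by rewrite W_z ?mulr0 // Htri.
  - by rewrite (val_inj leq) eqxx in lk.
by apply/rowP => k; rewrite mxE; exact: (H k).
Qed.

End Graph.

Lemma inord_eq (a b : nat) : (a < 6)%N -> (b < 6)%N -> (inord a == inord b :> 'I_6) = eqn a b.
Proof. by move=> ha hb; rewrite -val_eqE /= !inordK. Qed.

Lemma cert m (e : rel 'I_m) (f : 'I_6 -> 'I_m) :
  (forall i j, e i j = e j i) -> (forall i, e i i = false) ->
  exists p : 'I_3 -> 'I_6 * 'I_6, exists q : 'I_3 -> 'I_6,
   [/\ (forall k l, k != l -> posO e f (p k) (p l) = negO e f (p k) (p l)),
       (forall k, (posO e f (p k) (p k) <= negO e f (p k) (p k))%N),
       (forall k, nzO (p k) (q k)) &
       (forall k l : 'I_3, (k < l)%N -> ~~ nzO (p l) (q k))].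
Proof.
move=> es ei.
pose g6 := fun i j => e (f i) (f j).
have gs : forall i j, g6 i j = g6 j i by move=> i j; exact: es.
have gi : forall i, g6 i i = false by move=> i; exact: ei.
have hchk : chk (bits_of g6).
  apply: (allP chk_all).
  by rewrite (_ : 15%N = size (bits_of g6)) ?allbits_mem // size_map.
case/hasP: hchk => c cin gc.
have tc := allP tri_all c cin.
have adj := tadj_ok gs gi.
set T := table (bits_of g6) in gc adj.
have posOE : forall x y z w, (x < 6)%N -> (y < 6)%N -> (z < 6)%N -> (w < 6)%N ->
   posO e f (inord x, inord y) (inord z, inord w) = posF (tadj T) x y z w.
  by move=> x y z w hx hy hz hw; rewrite /posO /posF /g /= !inord_eq // !adj.
have negOE : forall x y z w, (x < 6)%N -> (y < 6)%N -> (z < 6)%N -> (w < 6)%N ->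
   negO e f (inord x, inord y) (inord z, inord w) = negF (tadj T) x y z w.
  by move=> x y z w hx hy hz hw; rewrite /negO /negF /g /= !inord_eq // !adj.
have nzOE : forall x y u, (x < 6)%N -> (y < 6)%N -> (u < 6)%N ->
   nzO (inord x, inord y) (inord u) = nzN x y u.
  by move=> x y u hx hy hu; rewrite /nzO /nzN /= !inord_eq.
move: gc tc.
case: c cin => [|a1 [|b1 [|a2 [|b2 [|a3 [|b3 [|u1 [|u2 [|u3 [|? ?]]]]]]]]]] _ //.
move=> gc tc.
case/and5P: gc => o12 o13 o23 o21 /and5P [o31 o32 d1 d2 d3].
case/and5P: tc => hlt n1 n2 n3 /and3P [n4 n5 n6].
have /allP hl := hlt.
have [ha1 hb1 ha2] : [/\ (a1 < 6)%N, (b1 < 6)%N & (a2 < 6)%N]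
  by split; apply: hl; rewrite !inE eqxx ?orbT.
have [hb2 ha3 hb3] : [/\ (b2 < 6)%N, (a3 < 6)%N & (b3 < 6)%N]
  by split; apply: hl; rewrite !inE eqxx ?orbT.
have [hu1 hu2 hu3] : [/\ (u1 < 6)%N, (u2 < 6)%N & (u3 < 6)%N]
  by split; apply: hl; rewrite !inE eqxx ?orbT.
pose p (k : 'I_3) := nth (ord0, ord0)
  [:: (inord a1, inord b1); (inord a2, inord b2); (inord a3, inord b3)] k : 'I_6 * 'I_6.
pose q (k : 'I_3) := nth ord0 [:: inord u1; inord u2; inord u3] k : 'I_6.
exists p, q; split.
- move=> [[|[|[|k]]] hk] // [[|[|[|l]]] hl'] // kl;
    rewrite /p /= ?posOE ?negOE //; try exact/eqP;
    by rewrite -val_eqE /= in kl.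
- by move=> [[|[|[|k]]] hk] //; rewrite /p /= ?posOE ?negOE.
- by move=> [[|[|[|k]]] hk] //; rewrite /p /q /= ?nzOE.
- by move=> [[|[|[|k]]] hk] // [[|[|[|l]]] hl'] // kl; rewrite /p /q /= ?nzOE.
Qed.

Lemma lap_map (R : rcfType) m (e : rel 'I_m) :
  map_mx (real_complex R) (laplacian R e) = laplacian R[i] e.
Proof.
apply/matrixP => i j; rewrite !mxE rmorphB /= rmorph_nat.
by case: eqP => _; rewrite ?rmorph_nat ?rmorph0.
Qed.

Lemma lap_herm (C : numClosedFieldType) m (e : rel 'I_m) :
  simple_graph e -> laplacian C e \is hermsymmx.
Proof.
move=> [sym irr]; apply/is_hermitianmxP; rewrite expr0 scale1r.
apply/matrixP => i j; rewrite !mxE rmorphB /= conjC_nat sym.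
case: (eqVneq i j) => [->|ne]; first by rewrite conjC_nat.
by rewrite rmorph0.
Qed.

Lemma lam_count (R : rcfType) (lam : seq R) (t : R) m :
  size lam = m -> sorted (fun x y => y <= x) lam -> (2 < m)%N ->
  nth 0 lam 2 < t -> (m - 2 <= count (fun x : R => (x < t)%R) lam)%N.
Proof.
case: lam => [|a [|b [|c r]]] //= <- //.
move=> /and3P [_ _ hp] _ ct.
have := order_path_min _ hp.
have tr : transitive (fun x y : R => y <= x).
  by move=> x y z h1 h2; apply: le_trans h2 h1.
move=> /(_ tr) /allP hr.
rewrite ct /=.
have -> : count (fun x => x < t) r = size r.
  apply/eqP; rewrite -all_count; apply/allP => x xr.
  by apply: le_lt_trans (hr x xr) ct.
lia.
Qed.
Lemma charB (F : fieldType) n (P : 'M[F]_n) (d : 'rV[F]_n) : P \in unitmx ->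
  char_poly (invmx P *m diag_mx d *m P) = \prod_(i < n) ('X - (d 0 i)%:P).
Proof.
move=> Pu.
have -> : char_poly (invmx P *m diag_mx d *m P) = char_poly (diag_mx d).
  rewrite /char_poly /char_poly_mx.
  have -> : 'X%:M - map_mx polyC (invmx P *m diag_mx d *m P) =
     map_mx polyC (invmx P) *m ('X%:M - map_mx polyC (diag_mx d)) *m map_mx polyC P.
    rewrite !map_mxM mulmxBr mulmxBl mul_mx_scalar -scalemxAl.
    rewrite -[map_mx _ (invmx P) *m map_mx _ P]map_mxM.
    by rewrite mulVmx // map_mx1 scalemx1.
  rewrite !det_mulmx mulrC mulrA -det_mulmx -map_mxM mulmxV // map_mx1 det1.
  by rewrite mul1r.
rewrite char_poly_trig; last exact: is_diag_mx_is_trig (diag_mx_is_diag d).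
by apply: eq_bigr => i _; rewrite mxE eqxx mulr1n.
Qed.

Local Open Scope sesquilinear_scope.
Section LA.
Variable C : numClosedFieldType.

Lemma key m (M : 'M[C]_m) (t : C) (W : 'M[C]_(3,m)) :
  M \is hermsymmx -> \rank W = 3%N ->
  (forall c : 'rV_3, 0 <= qf (M - t%:M) (c *m W)) ->
  (m - 2 <= #|[set u | (spectral_diag M ord0 u < t)%R]|)%N -> False.
Proof.
move=> Mh rW HW.
set P := spectralmx M; set D := spectral_diag M.
have MP : M = invmx P *m diag_mx D *m P.
  by apply/orthomx_spectralP/hermitian_normalmx.
have Pu : P \is unitarymx := spectral_unitarymx M.
have PP : P *m P^t* = 1%:M by apply/unitarymxP.
have PP' : P^t* *m P = 1%:M by apply: mulmx1C.
have iP : invmx P = P^t* by apply: invmx_unitary.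
set I := [set u | (D ord0 u < t)%R].
set k := #|I| => hI.
pose S : 'M[C]_(k, m) := \matrix_(i, u) (enum_val i == u)%:R.
have SS : S *m S^t* = 1%:M.
  apply/matrixP => i j; rewrite !mxE.
  rewrite (bigD1 (enum_val i)) //= big1 ?addr0.
    rewrite !mxE eqxx mul1r (inj_eq enum_val_inj) eq_sym.
    by case: (i == j); rewrite ?conjC1 ?conjC0.
  by move=> u hu; rewrite !mxE eq_sym (negbTE hu) mul0r.
pose K := S *m P.
have KK : K *m K^t* = 1%:M.
  by rewrite /K trmx_mul map_mxM mulmxA -(mulmxA S) PP mulmx1 SS.
have rK : \rank K = k by apply: mxrank_unitary; apply/unitarymxP.
have := mxrank_sum_cap W K; rewrite rW rK => hs.
have := rank_leq_col (W + K)%MS => hc.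
have : (W :&: K)%MS != 0.
  rewrite -mxrank_eq0; apply/eqP => h0; move: hs; rewrite h0 addn0 => hs.
  move: hc hI; rewrite hs; lia.
case/rowV0Pn => v vsub vnz.
have /submxP [c vc] : (v <= W)%MS := submx_trans vsub (capmxSl _ _).
have /submxP [y vy] : (v <= K)%MS := submx_trans vsub (capmxSr _ _).
have := HW c; rewrite -vc.
set z := y *m S.
have vz : v = z *m P by rewrite vy mulmxA.
have Mt : M - t%:M = P^t* *m (diag_mx (D - const_mx t)) *m P.
  rewrite MP iP linearB /= diag_const_mx mulmxBr mulmxBl.
  by rewrite mul_mx_scalar -scalemxAl PP' scalemx1.
have -> : qf (M - t%:M) v = qf (diag_mx (D - const_mx t)) z.
  rewrite /qf Mt vz trmx_mul map_mxM.
  by rewrite !mulmxA -(mulmxA z P) PP mulmx1 -!(mulmxA _ P) PP mulmx1.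
rewrite qf_diag.
have zI : forall u, z 0 u != 0 -> u \in I.
  move=> u; rewrite /z !mxE; apply: contraR => uI.
  rewrite big1 // => i _; rewrite !mxE.
  have := enum_valP i; case: eqP => [-> Hu|_ _]; [by rewrite Hu in uI | by rewrite /= mulr0n mulr0].
have znz : z != 0.
  by apply: contraNneq vnz => z0; rewrite vz z0 mul0mx.
have term : forall w, z 0 w * (D - const_mx t) 0 w * (z 0 w)^* =
   (z 0 w * (z 0 w)^*) * (D 0 w - t).
  by move=> w; rewrite !mxE mulrAC.
have term_le : forall w, z 0 w * (D - const_mx t) 0 w * (z 0 w)^* <= 0.
  move=> w; rewrite term.
  case: (eqVneq (z 0 w) 0) => [->|nz]; first by rewrite !mul0r.
  have := zI w nz; rewrite inE => hw; apply: mulr_ge0_le0.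
    exact: mul_conjC_ge0.
  by rewrite subr_le0; apply: ltW.
case/rV0Pn: znz => u zu.
have term_lt : z 0 u * (D - const_mx t) 0 u * (z 0 u)^* < 0.
  rewrite term pmulr_rlt0 ?mul_conjC_gt0 // subr_lt0.
  by have := zI u zu; rewrite inE.
rewrite (bigD1 u) //= => h.
have : z 0 u * (D - const_mx t) 0 u * (z 0 u)^*
   + \sum_(i | i != u) (z 0 i * (D - const_mx t) 0 i * (z 0 i)^*) < 0 + 0.
  by apply: ltr_leD => //; apply: sumr_le0 => i _; apply: term_le.
by rewrite addr0 => /(le_lt_trans h); rewrite ltxx.
Qed.
End LA.

Lemma countI (R : rcfType) m (e : rel 'I_m) (lam : seq R) (t : R) :
  simple_graph e -> laplacian_spectrum e lam -> (2 < m)%N -> nth 0 lam 2 < t ->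
  (m - 2 <= #|[set u | (spectral_diag (laplacian R[i] e) ord0 u < t%:C%C)%R]|)%N.
Proof.
move=> Hg [sz srt cp] m2 lt.
set M := laplacian R[i] e.
set P := spectralmx M; set D := spectral_diag M.
have MP : M = invmx P *m diag_mx D *m P.
  by apply/orthomx_spectralP/hermitian_normalmx/lap_herm.
have cpM : char_poly M = \prod_(i < m) ('X - (D 0 i)%:P).
  by rewrite {1}MP charB // spectral_unit.
have cpM2 : char_poly M = \prod_(x <- lam) ('X - (x%:C%C)%:P).
  by rewrite /M -lap_map -map_char_poly cp map_prod_XsubC.
have pe : perm_eq [seq D 0 i | i <- enum 'I_m] [seq x%:C%C | x <- lam].
  apply: prod_XsubC_eq; rewrite !big_map -cpM2 cpM; apply: eq_big_seq => //.
rewrite card_count.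
have -> : count (fun u => D ord0 u < t%:C%C) (enum 'I_m) =
   count (fun x => x < t%:C%C) [seq D 0 i | i <- enum 'I_m].
  by rewrite [RHS]count_map.
rewrite (permP pe) count_map.
have -> : count (preim (real_complex R) (fun x => x < t%:C%C)) lam =
          count (fun x => x < t) lam.
  by apply: eq_count => x /=; rewrite ltcR.
exact: lam_count.
Qed.

Unset Implicit Arguments.

Theorem mainTheorem15 (R : rcfType) (m : nat) (e : rel 'I_m) (lam : seq R) :
  (6 <= m)%N -> simple_graph e -> laplacian_spectrum e lam ->
  (nth 0%N (degree_seq e) 5)%:R <= nth 0 lam 2.
Proof.
move=> m6 Hg Hs.
rewrite leNgt; apply/negP => hlt.
have [f [finj Hdeg]] := sel e m6.
case: (Hg) => es ei.
have [p [q [Ho Hd Hp Ht]]] := cert f es ei.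
have m2 : (2 < m)%N by apply: leq_trans m6.
have hI := countI Hg Hs m2 hlt.
rewrite rmorph_nat in hI.
apply: (key (@lap_herm R[i] _ _ Hg) (W_rank R[i] finj Hp Ht) _ hI).
by move=> c; apply: (graph_qf Hdeg Ho Hd c).
Qed.
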